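(* Let $n,k,d,d_p$ be positive integers with $d_p\ge n$, and let $\mathbf{P}\in\mathbb{R}^{n\times d_p}$ have orthonormal rows $\mathbf{P}_1,\dots,\mathbf{P}_n$. Let $\mu$ be any order-$2k$ equivalence class, i.e. $\mu\in[n]^{2k}/_\sim$, with basis tensor $\mathbf{B}^\mu\in\mathbb{R}^{n^{2k}}$, regarded as an $n^k\times n^k$ matrix $\mathbf{B}^\mu_{\mathbf{i},\mathbf{j}}$ indexed by $\mathbf{i},\mathbf{j}\in[n]^k$. Then for every $\delta>0$ there exist a type identifier dimension $d_e$, type identifiers $\mathbf{E}^{\gamma}\in\mathbb{R}^{d_e}$ (one for each order-$k$ equivalence class $\gamma$), a hidden dimension $d_{\mathcal{T}}$, an input projection $w^{in}\in\mathbb{R}^{(d+kd_p+d_e)\times d_{\mathcal{T}}}$, a head dimension $d_H$, and query/key parameters $w^Q,w^K\in\mathbb{R}^{d_{\mathcal{T}}\times d_H}$, $b^Q,b^K\in\mathbb{R}^{d_H}$ such that for every $\mathbf{X}\in\mathbb{R}^{n^k\times d}$ the self-attention coefficients $\boldsymbol{\alpha}$ computed from $\mathbf{Z}=\mathbf{X}^{in}w^{in}$ satisfy $$\Big|\boldsymbol{\alpha}_{\mathbf{i},\mathbf{j}}-\frac{\mathbf{B}^\mu_{\mathbf{i},\mathbf{j}}}{\sum_{\mathbf{j}'\in[n]^k}\mathbf{B}^\mu_{\mathbf{i},\mathbf{j}'}}\Big|<\delta$$ for all $\mathbf{i},\mathbf{j}\in[n]^k$ such that $\sum_{\mathbf{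j}'}\mathbf{B}^\mu_{\mathbf{i},\mathbf{j}'}>0$.
   Context: For $l\ge1$, the equivalence relation $\sim$ on $[n]^l$ relates $\mathbf{i}\sim\mathbf{j}$ iff $(i_1,\dots,i_l)=(\pi(j_1),\dots,\pi(j_l))$ for some permutation $\pi\in S_n$; an order-$l$ equivalence class is an element of $[n]^l/_\sim$ (equivalently, the set of all multi-indices with a given equality pattern among their entries). The basis tensor of an order-$l$ class $\gamma$ is $\mathbf{B}^\gamma\in\mathbb{R}^{n^l}$ with $\mathbf{B}^\gamma_{\mathbf{i}}=1$ if $\mathbf{i}\in\gamma$ and $0$ otherwise; for an order-$2k$ class $\mu$ we write $\mathbf{B}^\mu_{\mathbf{i},\mathbf{j}}$ for the entry at the concatenated index $(\mathbf{i},\mathbf{j})$. Augmentation: given $\mathbf{X}\in\mathbb{R}^{n^k\times d}$ (rows $\mathbf{X}_{\mathbf{i}}$ indexed by $\mathbf{i}=(i_1,\dots,i_k)\in[n]^k$), node identifiers $\mathbf{P}$ and type identifiers $\mathbf{E}^\gamma$, the augmented tensor $\mathbf{X}^{in}\in\mathbb{R}^{n^k\times(d+kd_p+d_e)}$ has rows $\mathbf{X}^{in}_{\mathbf{i}}=[\mathbf{X}_{\mathbf{i}},\mathbf{P}_{i_1},\dots,\mathbf{P}_{i_k},\mathbf{E}^{\gamma}]$ where $\gamma$ is the order-$k$ class containing $\mathbf{i}$. A self-attention head on $\mathbf{Z}\in\mathbb{R}^{n^k\times d_{\mathcal{T}}}$ has coefficients $\boldsymbol{\alpha}=\mathrm{softmax}\big((\mathbf{Z}w^Q+\mathbf{1}(b^Q)^\top)(\mathbf{Z}w^K+\mathbf{1}(b^K)^\top)^\top/\sqrt{d_H}\big)$,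 with softmax taken over each row (over keys $\mathbf{j}\in[n]^k$). *)

(* Defs.v *)
From HB Require Import structures.
From mathcomp Require Import all_boot all_order all_algebra all_fingroup.
From mathcomp Require Import reals sequences exp.
Set Implicit Arguments. Unset Strict Implicit. Unset Printing Implicit Defensive.
Import Order.TTheory GRing.Theory Num.Theory.
Local Open Scope ring_scope.

Definition idx (n l : nat) := {ffun 'I_l -> 'I_n}.

Definition equivb (n l : nat) (i j : idx n l) : bool :=
  [exists pi : {perm 'I_n}, i == [ffun a => pi (j a)]].

Definition is_eqclass (n l : nat) (C : {set idx n l}) : Prop :=
  exists i0 : idx n l, C = [set j | equivb i0 j].

Definition concat_idx (n k : nat) (i j : idx n k) : idx n (k + k) :=
  [ffun a => match split a with inl a1 => i a1 | inr a2 => j a2 end].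

Definition basisB (R : nzRingType) (n k : nat) (mu : {set idx n (k + k)})
  (i j : idx n k) : R := (concat_idx i j \in mu)%:R.

Definition Pcat (R : nzRingType) (n k dp : nat) (P : 'M[R]_(n, dp)) (i : idx n k)
  : 'rV[R]_(k * dp) := mxvec (\matrix_(a < k, c < dp) P (i a) c).

(* augmented input row X^in_i = [X_i, P_{i_1},...,P_{i_k}, E^{gamma(i)}];
   E is given as a function of the multi-index, required (in the statement)
   to be constant on equivalence classes *)
Definition Xin (R : nzRingType) (n k d dp de : nat) (X : idx n k -> 'rV[R]_d)
  (P : 'M[R]_(n, dp)) (E : idx n k -> 'rV[R]_de) (i : idx n k)
  : 'rV[R]_(d + (k * dp + de)) := row_mx (X i) (row_mx (@Pcat R n k dp P i) (E i)).

Definition attn_score (R : realType) (n k dT dH : nat) (Z : idx n k -> 'rV[R]_dT)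
  (wQ wK : 'M[R]_(dT, dH)) (bQ bK : 'rV[R]_dH) (i j : idx n k) : R :=
  ((Z i *m wQ + bQ) *m (Z j *m wK + bK)^T) 0 0 / Num.sqrt (dH%:R).

Definition attn (R : realType) (n k dT dH : nat) (Z : idx n k -> 'rV[R]_dT)
  (wQ wK : 'M[R]_(dT, dH)) (bQ bK : 'rV[R]_dH) (i j : idx n k) : R :=
  expR (attn_score Z wQ wK bQ bK i j) /
  \sum_(j' : idx n k) expR (attn_score Z wQ wK bQ bK i j').

(* Main.v *)
Require Import Defs.
From HB Require Import structures.
From mathcomp Require Import all_boot all_order all_algebra all_fingroup.
From mathcomp Require Import reals sequences exp.
From mathcomp Require Import lra ring.
Import Order.TTheory GRing.Theory Num.Theory.
Local Open Scope ring_scope.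

Lemma mxvec_dot (R : nzRingType) m n (A B : 'M[R]_(m, n)) :
  (mxvec A *m (mxvec B)^T) 0 0 = \sum_(a < m) \sum_(c < n) A a c * B a c.
Proof.
rewrite mxE.
rewrite (reindex (uncurry (@mxvec_index m n))) /=; last first.
  exact: curry_mxvec_bij.
rewrite pair_big /=; apply: eq_bigr => -[a c] _ /=.
by rewrite !mxE !mxvecE.
Qed.

Lemma ext_perm (T : finType) (g : T -> T) (s : seq T) :
  {in s &, injective g} -> exists p : {perm T}, {in s, forall v, p v = g v}.
Proof.
elim: s => [|w s IH] ginj; first by exists 1%g.
have [|p Hp] := IH; first by move=> x y xs ys; apply: ginj; rewrite inE ?xs ?ys orbT.
case ws: (w \in s).
  by exists p => v; rewrite inE => /orP [/eqP -> | /Hp //]; apply: Hp.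
exists (p * tperm (p w) (g w))%g => v; rewrite inE permM => /orP [/eqP -> | vs].
  by rewrite tpermL.
rewrite (Hp v vs) tpermD //.
  rewrite -(Hp v vs) (inj_eq perm_inj); apply/eqP => vw; by rewrite vw vs in ws.
apply/eqP => /ginj; rewrite !inE eqxx vs orbT => /(_ isT isT) vw.
by rewrite vw vs in ws.
Qed.

Definition patt {n l} (x y : idx n l) : bool :=
  [forall a, forall b, (x a == x b) == (y a == y b)].

Lemma equivb_patt {n l} (x y : idx n l) : equivb x y = patt x y.
Proof.
apply/idP/idP.
  case/existsP => p /eqP ->; apply/forallP => a; apply/forallP => b.
  by rewrite !ffunE (inj_eq perm_inj).
move=> /forallP H.
pose g v := if [pick a | y a == v] is Some a then x a else v.
have gy a : g (y a) = x a.
  rewrite /g; case: pickP => [a' /eqP ya|/(_ a)]; last by rewrite eqxx.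
  by move: (H a') => /forallP /(_ a) /eqP; rewrite ya eqxx => /eqP.
have [|p Hp] := @ext_perm _ g [seq y a | a : 'I_l].
  move=> v w /mapP [a _ ->] /mapP [b _ ->]; rewrite !gy => xab.
  by move: (H a) => /forallP /(_ b) /eqP; rewrite xab eqxx => /esym/eqP.
apply/existsP; exists p; apply/eqP/ffunP => a; rewrite ffunE Hp ?gy //.
by apply: map_f; rewrite mem_enum.
Qed.
Lemma softmax_approx (R : realType) (I : finType) (s : I -> R) (S : {pred I})
  (M L : R) (j0 : I) :
  S j0 -> (forall j, S j -> s j = M) -> (forall j, ~~ S j -> s j <= M - L) ->
  forall j, `| expR (s j) / \sum_j' expR (s j') -
     (S j)%:R / \sum_j' ((S j')%:R : R) | <= #|I|%:R * expR (- L).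
Proof.
move=> Sj0 HS HnS j.
set D := \sum_j' expR (s j'); set m := \sum_j' ((S j')%:R : R).
set r := \sum_(j' | ~~ S j') expR (s j').
have r0 : 0 <= r by apply: sumr_ge0 => *; exact: expR_ge0.
have rle : r <= #|I|%:R * expR (M - L).
  apply: (@le_trans _ _ (\sum_(j' : I) expR (M - L))); last by rewrite sumr_const mulr_natl.
  rewrite [leRHS](bigID S) /= -[r]add0r; apply: lerD.
    by apply: sumr_ge0 => *; exact: expR_ge0.
  by apply: ler_sum => j' /HnS; rewrite ler_expR.
have eD : D = m * expR M + r.
  rewrite /D (bigID S) /=; congr (_ + _).
  rewrite /m mulr_suml [in RHS](bigID S) /= [X in _ = _ + X]big1 ?addr0.
    by apply: eq_bigr => j' Sj'; rewrite HS // Sj' mul1r.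
  by move=> j' /negbTE ->; rewrite mul0r.
have m1 : 1 <= m.
  rewrite /m (bigD1 j0) //= Sj0 lerDl; exact: sumr_ge0.
have eM := expR_gt0 M.
have N1 : 1 <= #|I|%:R :> R.
  by rewrite ler1n; apply/card_gt0P; exists j0.
have DM : expR M <= D by rewrite eD; nra.
have D0 : 0 < D by exact: lt_le_trans DM.
have eML : expR (M - L) = expR M * expR (- L) by rewrite expRD.
have eL := expR_gt0 (- L).
case Sj: (S j).
  rewrite HS //= mul1r.
  have -> : expR M / D - m^-1 = - (r / (m * D)).
    rewrite eD; field; rewrite -eD; apply/andP; split; apply/lt0r_neq0 => //.
    exact: lt_le_trans m1.
  rewrite normrN ger0_norm; last by apply: divr_ge0 => //; nra.
  have mD : expR M <= m * D by nra.
  rewrite ler_pdivrMr; last by nra.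
  apply: (le_trans rle); rewrite eML.
  have Ne : 0 <= #|I|%:R * expR (- L) by apply: mulr_ge0 => //; exact: ltW.
  have := ler_wpM2l Ne mD; rewrite /= => h; apply: le_trans h; rewrite [leRHS]mulrC.
  by rewrite mulrCA.
rewrite mul0r subr0 ger0_norm; last by apply: divr_ge0; [exact: expR_ge0 | exact: ltW].
rewrite ler_pdivrMr //.
have := HnS j (negbT Sj); rewrite -ler_expR eML => h.
apply: (le_trans h); have h1 : expR M * expR (- L) <= D * expR (- L).
  by rewrite ler_pM2r.
apply: (le_trans h1); have eD0 : 0 <= expR (- L) * D by apply: mulr_ge0; exact: ltW.
nra.
Qed.

Lemma le_sum1 (R : realType) (I : finType) (F : I -> R) i0 :
  (forall i, 0 <= F i) -> F i0 <= \sum_i F i.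
Proof. by move=> h; rewrite (bigD1 i0) //= lerDl; exact: sumr_ge0. Qed.

Theorem lemma1 (R : realType) (n k d dp : nat)
  (hn : (0 < n)%N) (hk : (0 < k)%N) (hd : (0 < d)%N) (hdp : (n <= dp)%N)
  (P : 'M[R]_(n, dp)) (hP : P *m P^T = 1%:M)
  (mu : {set idx n (k + k)}) (hmu : is_eqclass mu)
  (delta : R) (hdelta : 0 < delta) :
  exists (de : nat) (E : idx n k -> 'rV[R]_de),
    (forall i j : idx n k, equivb i j -> E i = E j) /\
  exists (dT : nat) (win : 'M[R]_(d + (k * dp + de), dT))
         (dH : nat) (wQ wK : 'M[R]_(dT, dH)) (bQ bK : 'rV[R]_dH),
    [/\ (0 < de)%N, (0 < dT)%N, (0 < dH)%N &
    forall (X : idx n k -> 'rV[R]_d) (i j : idx n k),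
      0 < \sum_(j' : idx n k) basisB R mu i j' ->
      `| attn (fun l => Xin X P E l *m win) wQ wK bQ bK i j
         - basisB R mu i j / \sum_(j' : idx n k) basisB R mu i j' | < delta].
Proof.
case: hmu => x0 hmu.
pose i0 (a : 'I_k) := x0 (lshift k a).
pose j0 (b : 'I_k) := x0 (rshift k b).
pose pI (i : idx n k) := [forall a, forall b, (i0 a == i0 b) == (i a == i b)].
pose pJ (j : idx n k) := [forall a, forall b, (j0 a == j0 b) == (j a == j b)].
pose cr (i j : idx n k) := [forall a, forall b, (i0 a == j0 b) == (i a == j b)].
have cl a (i j : idx n k) : concat_idx i j (lshift k a) = i a.
  by rewrite ffunE -[lshift k a]/(unsplit (inl a)) unsplitK.
have cR a (i j : idx n k) : concat_idx i j (rshift k a) = j a.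
  by rewrite ffunE -[rshift k a]/(unsplit (inr a)) unsplitK.
have memI i j : concat_idx i j \in mu -> pI i.
  rewrite hmu inE equivb_patt => /forallP H; apply/forallP => a; apply/forallP => b.
  by move/forallP: (H (lshift k a)) => /(_ (lshift k b)); rewrite !cl.
have memE i j : pI i -> (concat_idx i j \in mu) = pJ j && cr i j.
  move=> hi; rewrite hmu inE equivb_patt; apply/idP/idP.
    move=> /forallP H; apply/andP; split; apply/forallP => a; apply/forallP => b.
      by move/forallP: (H (rshift k a)) => /(_ (rshift k b)); rewrite !cR.
    by move/forallP: (H (lshift k a)) => /(_ (rshift k b)); rewrite cl cR.
  case/andP => /forallP hj /forallP hc; apply/forallP => a; apply/forallP => b.
  rewrite -[a]splitK -[b]splitK; case: (split a) => a'; case: (split b) => b'.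
  - by rewrite !cl; move/forallP: hi => /(_ a') /forallP /(_ b').
  - by rewrite cl cR; move/forallP: (hc a') => /(_ b').
  - rewrite cl cR [x0 _ == x0 _]eq_sym [j _ == i _]eq_sym.
    by move/forallP: (hc b') => /(_ a').
  - by rewrite !cR; move/forallP: (hj a') => /(_ b').
pose E (j : idx n k) : 'rV[R]_1 := ((pJ j)%:R)%:M.
exists 1%N, E; split.
  move=> i j; rewrite equivb_patt => /forallP H; rewrite /E.
  have -> : pJ i = pJ j; last by [].
  apply/forallP/forallP => h a; apply/forallP => b; move/forallP: (h a) => /(_ b);
    by move/forallP: (H a) => /(_ b) /eqP ->.
pose N : R := #|{: idx n k}|%:R.
pose L : R := N / delta.
pose dH := (k * dp + 1)%N.
pose c : R := L * Num.sqrt (dH%:R).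
pose sg (a b : 'I_k) : R := if i0 a == j0 b then 1 else -1.
pose Sig : 'M[R]_k := \matrix_(a, b) sg a b.
pose wQ : 'M[R]_(d + (k * dp + 1), dH) :=
  col_mx 0 (col_mx (row_mx (c *: lin_mx (mulmx Sig^T)) 0) 0).
pose bQ : 'rV[R]_dH := row_mx 0 (c%:M).
pose wK : 'M[R]_(d + (k * dp + 1), dH) :=
  col_mx 0 (col_mx (row_mx 1%:M 0) (row_mx 0 1%:M)).
exists (d + (k * dp + 1))%N, 1%:M, dH, wQ, wK, bQ, 0.
split => //; first by rewrite addn_gt0 hd.
  by rewrite /dH addn1.
move=> X i j hsum.
pose G (l : idx n k) : R := \sum_b \sum_a sg a b * (i a == l b)%:R + (pJ l)%:R.
have sqp : 0 < Num.sqrt (dH%:R : R) by rewrite sqrtr_gt0 ltr0n /dH addn1.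
have sc l : attn_score (fun l => Xin X P E l *m 1%:M) wQ wK bQ 0 i l = L * G l.
  rewrite /attn_score !mulmx1 /Xin /wQ /wK /bQ !mul_row_col !mulmx0 !add0r !addr0.
  rewrite !mul_mx_row !mulmx0 add_row_mx !addr0 add0r add_row_mx addr0 add0r.
  rewrite tr_row_mx mul_row_col mxE !mulmx1 -scalemxAr /Pcat mul_vec_lin -scalemxAl.
  rewrite /E tr_scalar_mx -scalar_mxM [in X in _ + X]mxE mulr1n [in X in X + _]mxE mxvec_dot.
  rewrite [X in c * X](_ : _ = \sum_b \sum_a sg a b * (i a == l b)%:R); last first.
    apply: eq_bigr => b _ /=.
    under eq_bigr do rewrite !mxE mulr_suml.
    rewrite exchange_big /=; apply: eq_bigr => a _.
    have := congr1 (fun M : 'M[R]_n => M (i a) (l b)) hP; rewrite /= mxE [in RHS]mxE => <-.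
    rewrite mulr_sumr; apply: eq_bigr => cc _; rewrite !mxE; ring.
  rewrite /G /c; field; exact: lt0r_neq0.
have [j' hj'] : exists j', concat_idx i j' \in mu.
  case: (pickP [pred j' | concat_idx i j' \in mu]) => [j' hj'|none]; first by exists j'.
  by move: hsum; rewrite big1 ?ltxx // => l _; have := none l; rewrite /basisB /= => ->.
have hi := memI i j' hj'.
have N1 : 1 <= N by rewrite /N ler1n; apply/card_gt0P; exists j'.
have L0 : 0 < L by rewrite /L divr_gt0 //; exact: lt_le_trans N1.
pose T : R := \sum_b \sum_a ((i0 a == j0 b)%:R : R).
have term (l : idx n k) a b : sg a b * (i a == l b)%:R <= (i0 a == j0 b)%:R.
  by rewrite /sg; case: (i0 a == j0 b); case: (i a == l b) => /=; lra.
have hS l : concat_idx i l \in mu ->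
    attn_score (fun l => Xin X P E l *m 1%:M) wQ wK bQ 0 i l = L * (T + 1).
  rewrite sc memE // => /andP [hj hc]; congr (L * _); rewrite /G hj; congr (_ + _).
  apply: eq_bigr => b _; apply: eq_bigr => a _.
  move/forallP: hc => /(_ a) /forallP /(_ b) /eqP <-.
  by rewrite /sg; case: (i0 a == j0 b) => /=; lra.
have hnS l : ~~ (concat_idx i l \in mu) ->
    attn_score (fun l => Xin X P E l *m 1%:M) wQ wK bQ 0 i l <= L * (T + 1) - L.
  rewrite sc memE // => hl.
  suff : G l <= T by move=> h; nra.
  have tsum : \sum_b \sum_a sg a b * (i a == l b)%:R <= T.
    by apply: ler_sum => b _; apply: ler_sum => a _; exact: term.
  rewrite /G; case hj: (pJ l); last by rewrite addr0.
  move: hl; rewrite hj /= => /forallPn [a /forallPn [b /negP hab]].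
  suff : 1 <= T - \sum_b \sum_a sg a b * (i a == l b)%:R by lra.
  rewrite /T -sumrB; under eq_bigr do rewrite -sumrB.
  have nn1 : forall b', 0 <= \sum_a ((i0 a == j0 b')%:R - sg a b' * (i a == l b')%:R).
    by move=> b'; apply: sumr_ge0 => a' _; rewrite subr_ge0; exact: term.
  have nn2 : forall a', 0 <= ((i0 a' == j0 b)%:R - sg a' b * (i a' == l b)%:R).
    by move=> a'; rewrite subr_ge0; exact: term.
  apply: le_trans; last exact: (le_sum1 _ _ _ b nn1).
  apply: le_trans; last exact: (le_sum1 _ _ _ a nn2).
  move: hab; rewrite /sg; case: (i0 a == j0 b); case: (i a == l b) => //= _; lra.
have := @softmax_approx R _ (attn_score (fun l => Xin X P E l *m 1%:M) wQ wK bQ 0 i)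
  [pred l | concat_idx i l \in mu] (L * (T + 1)) L j' hj' hS hnS j.
move=> h; apply: le_lt_trans h _.
rewrite expRN -/N.
have e1 := expR_ge1Dx L; have eL := expR_gt0 L.
have dL : delta * L = N by rewrite /L mulrC divfK //; exact: lt0r_neq0.
rewrite -/(N / expR L) ltr_pdivrMr //; nra.
Qed.
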